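(* Let $R$ be a commutative domain, $B=R(t,\sigma,H,J)$, and let $\mathcal O=\{\sigma^k(\mathfrak m):k\in\mathbb Z\}\subseteq\operatorname{Maxspec}(R)$ be an infinite orbit. If $M$ is a simple $B$-module which is an $R$-weight module with $\operatorname{Supp}_R(M)\subseteq\mathcal O$, then $\dim_{R/\sigma^k(\mathfrak m)}M_{\sigma^k(\mathfrak m)}\le1$ for all $k\in\mathbb Z$.
   Context: $\Bbbk$ is a field; all algebras are associative unital $\Bbbk$-algebras. For an algebra $R$ and $\sigma\in\operatorname{Aut}_\Bbbk(R)$, $R[t,t^{-1};\sigma]$ is the skew Laurent ring: generated over $R$ by $t,t^{-1}$ with $tt^{-1}=t^{-1}t=1$ and $t^{\pm1}r=\sigma^{\pm1}(r)t^{\pm1}$ for $r\in R$. Given two-sided ideals $H,J$ of $R$, set $I^{(0)}=R$, $I^{(n)}=J\sigma(J)\cdots\sigma^{n-1}(J)$ for $n\ge1$, and $I^{(n)}=\sigma^{-1}(H)\sigma^{-2}(H)\cdots\sigma^{n}(H)$ for $n\le-1$; it is assumed throughout that $I^{(n)}\neq0$ for all $n\in\mathbb Z$. The Bell–Rogalski (BR) algebra is $R(t,\sigma,H,J)=\bigoplus_{n\in\mathbb Z}I^{(n)}t^n\subseteq R[t,t^{-1};\sigma]$. For $R$ a commutative domain, a left $B$-module $M$ is an $R$-weight module if $M=\bigoplus_{\mathfrak m\in\operatorname{Maxspec}(R)}M_{\mathfrak m}$ where $M_{\mathfrak m}=\{v\in M:\mathfrak m v=0\}$ and $\dim_{R/\mathfrak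 m}M_{\mathfrak m}<\infty$ for all $\mathfrak m$; $\operatorname{Supp}_R(M)=\{\mathfrak m:M_{\mathfrak m}\neq0\}$. $\mathbb Z$ acts on $\operatorname{Maxspec}(R)$ by $k\cdot\mathfrak m=\sigma^k(\mathfrak m)$. *)

(* Defs.v *)
From HB Require Import structures.
From mathcomp Require Import all_boot all_order all_algebra.
Set Implicit Arguments. Unset Strict Implicit. Unset Printing Implicit Defensive.
Import Order.TTheory GRing.Theory Num.Theory.
Local Open Scope ring_scope.

Section BR.
Variable R : comNzRingType.

Definition same_set (A B : R -> Prop) : Prop := forall x, A x <-> B x.

(* two-sided ideal (R is commutative) *)
Definition is_ideal (A : R -> Prop) : Prop :=
  [/\ A 0, (forall x y, A x -> A y -> A (x + y)) & (forall r x, A x -> A (r * x))].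

Definition is_maximal_ideal (P : R -> Prop) : Prop :=
  [/\ is_ideal P, ~ P 1 &
      forall Q, is_ideal Q -> (forall x, P x -> Q x) -> same_set Q P \/ Q 1].

Definition ideal_prod (A B : R -> Prop) : R -> Prop :=
  fun x => exists n (a b : 'I_n -> R),
    [/\ forall i, A (a i), forall i, B (b i) & x = \sum_(i < n) a i * b i].

Definition img (f : R -> R) (A : R -> Prop) : R -> Prop :=
  fun x => exists y, A y /\ x = f y.

Fixpoint iprod (f : nat -> R -> Prop) (n : nat) : R -> Prop :=
  match n with
  | 0 => f 0
  | k.+1 => ideal_prod (iprod f k) (f k.+1)
  end.

Definition sigz (sig sigi : R -> R) (n : int) : R -> R :=
  match n with
  | Posz k => iter k sig
  | Negz k => iter k.+1 sigi
  end.

Definition BRI (sig sigi : R -> R) (H J : R -> Prop) (n : int) : R -> Prop :=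
  match n with
  | Posz 0 => fun _ => True
  | Posz k.+1 => iprod (fun i => img (iter i sig) J) k
  | Negz k => iprod (fun i => img (iter i.+1 sigi) H) k
  end.

Variable M : zmodType.

(* A left module over B = (+)_n I^(n) t^n, given by the action of the
   homogeneous elements r t^n (r in I^(n)): act n r v = (r t^n) . v.
   Values of act n r for r outside I^(n) are irrelevant. *)
Definition is_BR_module (sig sigi : R -> R) (H J : R -> Prop)
  (act : int -> R -> M -> M) : Prop :=
  let I := BRI sig sigi H J in
  [/\ forall n r u v, I n r -> act n r (u + v) = act n r u + act n r v,
      forall n r s v, I n r -> I n s -> act n (r + s) v = act n r v + act n s v,
      forall v, act 0 1 v = v &
      forall (n m : int) r s v, I n r -> I m s ->
        act n r (act m s v) = act (n + m) (r * sigz sig sigi n s) v].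

Definition is_BR_submodule (sig sigi : R -> R) (H J : R -> Prop)
  (act : int -> R -> M -> M) (N : M -> Prop) : Prop :=
  [/\ N 0, (forall u v, N u -> N v -> N (u + v)) &
      forall n r v, BRI sig sigi H J n r -> N v -> N (act n r v)].

Definition is_simple_BR_module (sig sigi : R -> R) (H J : R -> Prop)
  (act : int -> R -> M -> M) : Prop :=
  [/\ is_BR_module sig sigi H J act, exists v : M, v != 0 &
      forall N, is_BR_submodule sig sigi H J act N ->
        (forall v, N v -> v = 0) \/ (forall v, N v)].

(* weight space M_P = { v | P v = 0 }, R acting through the degree-0 part *)
Definition wspace (act : int -> R -> M -> M) (P : R -> Prop) (v : M) : Prop :=
  forall x, P x -> act 0 x v = 0.

(* M = (+)_{P in Maxspec R} M_P with each M_P finite-dimensional over R/P *)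
Definition is_weight_module (act : int -> R -> M -> M) : Prop :=
  [/\
      forall v : M, exists n (P : 'I_n -> R -> Prop) (w : 'I_n -> M),
        [/\ forall i, is_maximal_ideal (P i), forall i, wspace act (P i) (w i)
          & v = \sum_(i < n) w i],
      forall n (P : 'I_n -> R -> Prop) (w : 'I_n -> M),
        (forall i, is_maximal_ideal (P i)) -> (forall i, wspace act (P i) (w i)) ->
        (forall i j, i != j -> ~ same_set (P i) (P j)) ->
        \sum_(i < n) w i = 0 -> forall i, w i = 0 &
      forall P, is_maximal_ideal P -> exists n (w : 'I_n -> M),
        (forall i, wspace act P (w i)) /\
        forall v, wspace act P v -> exists c : 'I_n -> R,
          v = \sum_(i < n) act 0 (c i) (w i)].

End BR.

(* Main.v *)
Require Import Defs.
From HB Require Import structures.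
From mathcomp Require Import all_boot all_order all_algebra.
From mathcomp Require Import zify.
From Stdlib Require Import Classical.
Import Order.TTheory GRing.Theory Num.Theory.
Set Implicit Arguments.
Local Open Scope ring_scope.

Section Gen.
Variable R : comNzRingType.
Implicit Types A B C : R -> Prop.

Definition addclosed C := C 0 /\ forall a b, C a -> C b -> C (a + b).

Lemma ideal_add A : is_ideal A -> addclosed A.
Proof. by case=> ? ? ?. Qed.

Lemma ideal_mulr A x r : is_ideal A -> A x -> A (x * r).
Proof. by case=> _ _ h ?; rewrite mulrC; apply: h. Qed.

Lemma ideal_mull A x r : is_ideal A -> A x -> A (r * x).
Proof. by case=> _ _ h ?; apply: h. Qed.

Lemma ideal_sum A (I : Type) (s : seq I) (F : I -> R) :
  is_ideal A -> (forall i, A (F i)) -> A (\sum_(i <- s) F i).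
Proof.
move=> [h0 hD _] hF; apply: (big_ind (fun x => A x)) => //.
Qed.

Lemma gen_ind A B C x : addclosed C -> (forall a b, A a -> B b -> C (a * b)) ->
  ideal_prod A B x -> C x.
Proof.
move=> [C0 CD] hab [n [a [b [ha hb ->]]]].
by apply: (big_ind (fun x => C x)) => // i _; apply: hab.
Qed.

Lemma ideal_prod_ideal A B : is_ideal A -> is_ideal (ideal_prod A B).
Proof.
move=> hA; split.
- exists 0%N, (fun _ => 0), (fun _ => 0); split; [by case | by case | by rewrite big_ord0].
- move=> x y [n1 [a1 [b1 [ha1 hb1 ->]]]] [n2 [a2 [b2 [ha2 hb2 ->]]]].
  exists (n1 + n2)%N, (fun i => match split i with inl j => a1 j | inr j => a2 j end),
    (fun i => match split i with inl j => b1 j | inr j => b2 j end); split.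
  + by move=> i; case: (split i).
  + by move=> i; case: (split i).
  + rewrite big_split_ord /=; congr (_ + _); apply: eq_bigr => j _.
    * by rewrite (unsplitK (inl j)).
    * by rewrite (unsplitK (inr j)).
- move=> r x [n [a [b [ha hb ->]]]].
  exists n, (fun i => r * a i), b; split => //.
  + by move=> i; apply: ideal_mull.
  + by rewrite mulr_sumr; apply: eq_bigr => i _; rewrite mulrA.
Qed.

Lemma prod_mem A B a b : A a -> B b -> ideal_prod A B (a * b).
Proof.
move=> ha hb; exists 1%N, (fun _ => a), (fun _ => b); split => //.
by rewrite big_ord1.
Qed.

Lemma iprod_ideal (f : nat -> R -> Prop) k :
  (forall i, is_ideal (f i)) -> is_ideal (iprod f k).
Proof. by move=> h; elim: k => [|k IH] /=; [exact: h | exact: ideal_prod_ideal]. Qed.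

Lemma iprod_prod (f : nat -> R -> Prop) k (x : nat -> R) :
  (forall i, (i <= k)%N -> f i (x i)) -> iprod f k (\prod_(0 <= i < k.+1) x i).
Proof.
elim: k => [|k IH] h /=; first by rewrite big_nat1; apply: h.
rewrite big_nat_recr //=; apply: prod_mem; last exact: h.
by apply: IH => i hi; apply: h; apply: leqW.
Qed.

Lemma iprod_ind (f : nat -> R -> Prop) k C :
  addclosed C ->
  (forall x : nat -> R, (forall i, (i <= k)%N -> f i (x i)) -> C (\prod_(0 <= i < k.+1) x i)) ->
  forall y, iprod f k y -> C y.
Proof.
elim: k C => [|k IH] C hC hx y /=.
  move=> hy; have := hx (fun _ => y); rewrite big_nat1; apply.
  by move=> i; rewrite leqn0 => /eqP ->.
apply: gen_ind => // a b ha hb.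
pose C' := fun a => forall b, f k.+1 b -> C (a * b).
have hC' : addclosed C'.
  case: hC => C0 CD; split; first by move=> b' _; rewrite mul0r.
  by move=> a1 a2 h1 h2 b' hb'; rewrite mulrDl; apply: CD; [apply: h1|apply: h2].
apply: (IH C' hC') => // x hxk b' hb'.
have := hx (fun i => if i == k.+1 then b' else x i).
rewrite big_nat_recr //= eqxx.
have -> : \prod_(0 <= i < k.+1) (if i == k.+1 then b' else x i) = \prod_(0 <= i < k.+1) x i.
  rewrite !big_nat; apply: eq_bigr => i /andP [_ hi].
  by rewrite (ltn_eqF hi).
apply=> i hi; case: eqP => [->|ne] //.
by apply: hxk; rewrite leq_eqVlt in hi; case/orP: hi => [/eqP//|]; rewrite ltnS.
Qed.

Lemma iprod_prefix (f : nat -> R -> Prop) a c y :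
  (forall i, is_ideal (f i)) -> (c <= a)%N -> iprod f a y -> iprod f c y.
Proof.
move=> hI hca; apply: iprod_ind; first exact/ideal_add/iprod_ideal.
move=> x hx; rewrite (@big_cat_nat _ _ _ c.+1) //=.
apply: ideal_mulr; first exact: iprod_ideal.
by apply: iprod_prod => i hi; apply: hx; apply: leq_trans hca.
Qed.

Definition rhom (h : R -> R) :=
  [/\ h 0 = 0, forall a b, h (a + b) = h a + h b, forall a b, h (a * b) = h a * h b & h 1 = 1].

Lemma rhom_prod h (s : seq nat) (F : nat -> R) : rhom h ->
  h (\prod_(i <- s) F i) = \prod_(i <- s) h (F i).
Proof.
move=> [_ _ hM h1]; elim: s => [|i s IH]; first by rewrite !big_nil.
by rewrite !big_cons hM IH.
Qed.

Lemma rhom_comp h g : rhom h -> rhom g -> rhom (fun x => h (g x)).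
Proof.
move=> [h0 hD hM h1] [g0 gD gM g1]; split.
- by rewrite g0 h0.
- by move=> a b; rewrite gD hD.
- by move=> a b; rewrite gM hM.
- by rewrite g1 h1.
Qed.

Lemma rhom_iter h n : rhom h -> rhom (iter n h).
Proof.
move=> hh; elim: n => [|n IH]; first by split.
have [h0 hD hM h1] := rhom_comp hh IH.
by split; move=> *; rewrite ?iterS.
Qed.

Lemma rhom_inv h g : rhom h -> cancel h g -> cancel g h -> rhom g.
Proof.
move=> [h0 hD hM h1] hg gh; split.
- by rewrite -h0 hg.
- by move=> a b; rewrite -{1}(gh a) -{1}(gh b) -hD hg.
- by move=> a b; rewrite -{1}(gh a) -{1}(gh b) -hM hg.
- by rewrite -h1 hg.
Qed.

Lemma iprod_concat (f : nat -> R -> Prop) (psi : R -> R) a b r s :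
  (forall i, is_ideal (f i)) -> rhom psi ->
  (forall j y, f j y -> f (a.+1 + j)%N (psi y)) ->
  iprod f a r -> iprod f b s -> iprod f (a + b.+1)%N (r * psi s).
Proof.
move=> hI hpsi hsh hr hs.
have hT := @iprod_ideal f (a + b.+1)%N hI.
have [T0 TD] := ideal_add hT.
have [p0 pD pM p1] := hpsi.
move: r hr; apply: iprod_ind.
  split; first by rewrite mul0r.
  by move=> r1 r2 h1 h2; rewrite mulrDl; apply: TD.
move=> x hx; move: s hs; apply: iprod_ind.
  split; first by rewrite p0 mulr0.
  by move=> s1 s2 h1 h2; rewrite pD mulrDr; apply: TD.
move=> y hy.
pose z := fun i => if (i < a.+1)%N then x i else psi (y (i - a.+1)%N).
have -> : \prod_(0 <= i < a.+1) x i * psi (\prod_(0 <= i < b.+1) y i) =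
          \prod_(0 <= i < (a + b.+1).+1) z i.
  rewrite [RHS](@big_cat_nat _ _ _ a.+1) //=; last by rewrite ltnS leq_addr.
  congr (_ * _).
    by rewrite !big_nat; apply: eq_bigr => i /andP [_ hi]; rewrite /z hi.
  rewrite -{1}(add0n a.+1) big_addn rhom_prod //.
  have -> : ((a + b.+1).+1 - a.+1 = b.+1)%N by rewrite subSS addKn.
  rewrite !big_nat; apply: eq_bigr => i _.
  by rewrite /z -{2}(add0n a.+1) ltn_add2r ltn0 addnK.
apply: iprod_prod => i hi; rewrite /z; case: ifP => hia; first by apply: hx; rewrite -ltnS.
have hib : (i - a.+1 <= b)%N by rewrite leq_subLR; lia.
have := hsh (i - a.+1)%N _ (hy _ hib).
by rewrite subnKC // leqNgt hia.
Qed.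

Lemma iprod_suffix (f f' : nat -> R -> Prop) (psi : R -> R) b c s :
  (forall i, is_ideal (f' i)) -> rhom psi -> (c <= b)%N ->
  (forall j y, f (c + j)%N y -> f' j (psi y)) ->
  iprod f b s -> iprod f' (b - c)%N (psi s).
Proof.
move=> hI hpsi hcb hsh.
have hT := @iprod_ideal f' (b - c)%N hI.
have [T0 TD] := ideal_add hT.
have [p0 pD pM p1] := hpsi.
move: s; apply: (@iprod_ind f b (fun s => iprod f' (b - c)%N (psi s))).
  split; first by rewrite p0.
  by move=> s1 s2 h1 h2; rewrite pD; apply: TD.
move=> y hy; rewrite rhom_prod //.
rewrite [X in iprod _ _ X](@big_cat_nat _ _ _ c) //=; last exact: leqW.
apply: ideal_mull => //.
have -> : \prod_(c <= i < b.+1) psi (y i) = \prod_(0 <= i < (b - c).+1) psi (y (i + c)%N).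
  by rewrite -{1}(add0n c) big_addn subSn.
apply: iprod_prod => i hi; apply: hsh; rewrite addnC; apply: hy.
lia.
Qed.

Lemma img_ideal h g A : rhom h -> cancel g h -> is_ideal A -> is_ideal (img h A).
Proof.
move=> [h0 hD hM h1] gh [A0 AD AM]; split.
- by exists 0; rewrite h0.
- by move=> _ _ [x [hx ->]] [y [hy ->]]; exists (x + y); rewrite hD; split=> //; apply: AD.
- move=> r _ [y [hy ->]]; exists (g r * y); split; first exact: AM.
  by rewrite hM gh.
Qed.

Lemma img_maximal h g A : rhom h -> rhom g -> cancel h g -> cancel g h ->
  is_maximal_ideal A -> is_maximal_ideal (img h A).
Proof.
move=> hh hg hgK ghK [hA n1 hmax]; split.
- exact: img_ideal hh ghK hA.
- move=> [y [hy e]]; apply: n1.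
  have [_ _ _ g1] := hg.
  by have -> : (1 : R) = y by rewrite -(hgK y) -e g1.
- move=> Q hQ hsub.
  have hQ' : is_ideal (img g Q) by apply: img_ideal hg hgK hQ.
  have hsub' : forall x, A x -> img g Q x.
    by move=> x hx; exists (h x); split; [apply: hsub; exists x | rewrite hgK].
  case: (hmax _ hQ' hsub') => [hs|h1].
  + left => x; split; first last.
      by apply: hsub.
    move=> hx; have [y [hy ey]] : img g Q (g x) by exists x.
    have : A (g x) by apply/hs; exists x.
    by move=> hgx; exists (g x); rewrite ghK.
  + right; case: h1 => y [hy e].
    have [_ _ _ h1] := hh.
    by rewrite -h1 e ghK.
Qed.

End Gen.
Arguments rhom {R} h.
Arguments addclosed {R} C.

Section Main.
Variables (k : fieldType) (R : comAlgType k) (sig : {lrmorphism R -> R}) (sigi : R -> R).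
Hypotheses (sigK : cancel sig sigi) (sigiK : cancel sigi sig).

Notation sz := (sigz sig sigi).

Lemma rhom_sig : rhom sig.
Proof. by split; [exact: rmorph0 | exact: rmorphD | exact: rmorphM | exact: rmorph1]. Qed.

Lemma rhom_sigi : rhom sigi.
Proof. exact: (rhom_inv rhom_sig sigK sigiK). Qed.

Lemma iterK p : cancel (iter p sig) (iter p sigi).
Proof. by elim: p => [|p IH] x //; rewrite [iter p.+1 sig x]iterS iterSr sigK IH. Qed.

Lemma iterKi p : cancel (iter p sigi) (iter p sig).
Proof. by elim: p => [|p IH] x //; rewrite [iter p.+1 sigi x]iterS iterSr sigiK IH. Qed.

Lemma rhom_sigz n : rhom (sz n).
Proof. by case: n => p; apply: rhom_iter; [exact: rhom_sig | exact: rhom_sigi]. Qed.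

Lemma sigzS n x : sz (n + 1) x = sig (sz n x).
Proof.
case: n => [p|[|p]].
- have -> : Posz p + 1 = Posz p.+1 by lia.
  by [].
- have -> : Negz 0 + 1 = 0 by [].
  by rewrite /= sigiK.
- have -> : Negz p.+1 + 1 = Negz p by rewrite !NegzE; lia.
  by rewrite /= sigiK.
Qed.

Lemma sigzP n x : sz (n - 1) x = sigi (sz n x).
Proof.
case: n => [[|p]|p].
- by [].
- have -> : Posz p.+1 - 1 = Posz p by lia.
  by rewrite /= sigK.
- have -> : Negz p - 1 = Negz p.+1 by rewrite !NegzE; lia.
  by [].
Qed.

Lemma int_ind' (P : int -> Prop) : P 0 -> (forall n, P n -> P (n + 1)) ->
  (forall n, P n -> P (n - 1)) -> forall n, P n.
Proof.
move=> P0 PS PP; case=> p; elim: p => [|p IH] //.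
- have -> : Posz p.+1 = Posz p + 1 by lia.
  by apply: PS.
- have -> : Negz 0 = 0 - 1 by [].
  by apply: PP.
- have -> : Negz p.+1 = Negz p - 1 by rewrite !NegzE; lia.
  by apply: PP.
Qed.

Lemma sigz_add a b x : sz (a + b) x = sz a (sz b x).
Proof.
elim/int_ind': a x => [|n IH|n IH] x; first by rewrite add0r.
- by rewrite addrAC sigzS IH sigzS.
- by rewrite addrAC sigzP IH sigzP.
Qed.

Lemma sigzK a : cancel (sz a) (sz (- a)).
Proof. by move=> x; rewrite -sigz_add addNr. Qed.

Lemma sigzKi a : cancel (sz (- a)) (sz a).
Proof. by move=> x; rewrite -sigz_add addrN. Qed.

Lemma F_ideal J i : is_ideal J -> is_ideal (img (iter i sig) J).
Proof. move=> hJ; apply: img_ideal (iterKi i) hJ; exact/rhom_iter/rhom_sig. Qed.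

Lemma G_ideal H i : is_ideal H -> is_ideal (img (iter i sigi) H).
Proof. move=> hH; apply: img_ideal (iterK i) hH; exact/rhom_iter/rhom_sigi. Qed.

Lemma BRI_ideal H J n : is_ideal H -> is_ideal J -> is_ideal (BRI sig sigi H J n).
Proof.
move=> hH hJ; case: n => [[|a]|a] /=.
- by split.
- by apply: iprod_ideal => i; apply: F_ideal.
- by apply: iprod_ideal => i; apply: G_ideal.
Qed.

Lemma BRI_mul H J n m r s : is_ideal H -> is_ideal J ->
  BRI sig sigi H J n r -> BRI sig sigi H J m s ->
  BRI sig sigi H J (n + m) (r * sz n s).
Proof.
move=> hH hJ.
have hF : forall i, is_ideal (img (iter i sig) J) by move=> i; apply: F_ideal.
have hG : forall i, is_ideal (img (iter i.+1 sigi) H) by move=> i; apply: G_ideal.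
case: n => [[|a]|a]; case: m => [[|b]|b] hr hs.
- by rewrite add0r; apply: ideal_mull => //; apply: BRI_ideal.
- by rewrite add0r; apply: ideal_mull => //; apply: BRI_ideal.
- by rewrite add0r; apply: ideal_mull => //; apply: BRI_ideal.
- by rewrite addr0; apply: ideal_mulr => //; apply: BRI_ideal.
- have -> : Posz a.+1 + Posz b.+1 = Posz (a + b.+1).+1 by lia.
  apply: iprod_concat => //.
  + exact/rhom_iter/rhom_sig.
  + by move=> j _ [z [hz ->]]; exists z; split => //; rewrite iterD.
- case: (ltngtP a b) => hab.
  + have -> : Posz a.+1 + Negz b = Negz (b - a.+1) by rewrite !NegzE; lia.
    rewrite /= mulrC; apply: ideal_mulr; first exact: iprod_ideal.
    apply: (iprod_suffix (fun i => img (iter i.+1 sigi) H) (fun i => img (iter i.+1 sigi) H) (psi := iter a.+1 sig) b a.+1 s) => //.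
    * exact/rhom_iter/rhom_sig.
    * by move=> j _ [z [hz ->]]; exists z; split => //; rewrite -addnS iterD iterKi.
  + have -> : Posz a.+1 + Negz b = Posz (a - b.+1).+1 by rewrite !NegzE; lia.
    rewrite /=; apply: ideal_mulr; first exact: iprod_ideal.
    by apply: (iprod_prefix _ a _ r) => //; lia.
  + by have -> : Posz a.+1 + Negz b = 0 by rewrite !NegzE; lia.
- by rewrite addr0; apply: ideal_mulr => //; apply: BRI_ideal.
- case: (ltngtP a b) => hab.
  + have -> : Negz a + Posz b.+1 = Posz (b - a.+1).+1 by rewrite !NegzE; lia.
    rewrite /= mulrC; apply: ideal_mulr; first exact: iprod_ideal.
    apply: (iprod_suffix (fun i => img (iter i sig) J) (fun i => img (iter i sig) J) (psi := iter a.+1 sigi) b a.+1 s) => //.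
    * exact/rhom_iter/rhom_sigi.
    * by move=> j _ [z [hz ->]]; exists z; split => //; rewrite iterD iterK.
  + have -> : Negz a + Posz b.+1 = Negz (a - b.+1) by rewrite !NegzE; lia.
    rewrite /=; apply: ideal_mulr; first exact: iprod_ideal.
    by apply: (iprod_prefix _ a _ r) => //; lia.
  + by have -> : Negz a + Posz b.+1 = 0 by rewrite !NegzE; lia.
- have -> : Negz a + Negz b = Negz (a + b.+1) by rewrite !NegzE; lia.
  apply: iprod_concat => //.
  + exact/rhom_iter/rhom_sigi.
  + by move=> j _ [z [hz ->]]; exists z; split => //; rewrite -addnS iterD.
Qed.

End Main.

Unset Implicit Arguments.
Theorem proposition3p4
  (k : fieldType) (R : comAlgType k)
  (R_domain : forall a b : R, a * b = 0 -> a = 0 \/ b = 0)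
  (sig : {lrmorphism R -> R}) (sigi : R -> R)
  (sigK : cancel sig sigi) (sigiK : cancel sigi sig)
  (H J : R -> Prop) (HH : is_ideal H) (HJ : is_ideal J)
  (Inz : forall n : int, exists x, BRI sig sigi H J n x /\ x != 0)
  (m : R -> Prop) (m_max : is_maximal_ideal m)
  (orbit_infinite : forall (n : nat) (Q : 'I_n -> R -> Prop),
     exists l : int, forall i, ~ same_set (img (sigz sig sigi l) m) (Q i))
  (M : zmodType) (act : int -> R -> M -> M)
  (M_simple : is_simple_BR_module sig sigi H J act)
  (M_weight : is_weight_module act)
  (M_supp : forall P : R -> Prop, is_maximal_ideal P ->
     (exists v : M, v != 0 /\ wspace act P v) ->
     exists l : int, same_set P (img (sigz sig sigi l) m)) :
  forall l : int, exists w : M,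
    wspace act (img (sigz sig sigi l) m) w /\
    forall v, wspace act (img (sigz sig sigi l) m) v ->
      exists r : R, v = act 0 r w.
Proof.
move=> l.
set I := BRI sig sigi H J.
set sz := sigz sig sigi.
set f := fun j => img (sz j) m.
case: M_simple => [Mmod [v1 v1nz] Msimp].
case: (Mmod) => [actD actDr act01 actC].
case: M_weight => [_ Wdirect _].
have I0 : forall r, I 0 r by [].
have act0 : forall n r, I n r -> act n r 0 = 0.
  move=> n r h; apply: (addrI (act n r 0)); by rewrite addr0 -actD // addr0.
have actN : forall n r v, I n r -> act n r (- v) = - act n r v.
  move=> n r v h; apply: (addrI (act n r v)); by rewrite -actD // !subrr act0.
have act0r0 : forall v, act 0 0 v = 0.
  move=> v; apply: (addrI (act 0 0 v)); by rewrite addr0 -actDr ?I0 // addr0.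
have wsp0 : forall P, wspace act P 0 by move=> P x _; rewrite act0.
have wspD : forall P u v, wspace act P u -> wspace act P v -> wspace act P (u + v).
  by move=> P u v hu hv x hx; rewrite actD // hu // hv // addr0.
have wspN : forall P v, wspace act P v -> wspace act P (- v).
  by move=> P v hv x hx; rewrite actN // hv // oppr0.
have shift : forall n r v j, I n r -> wspace act (f j) v -> wspace act (f (j + n)) (act n r v).
  move=> n r v j hr hv _ [y [hy ->]].
  rewrite addrC /sz (sigz_add _ sigK sigiK).
  have hz : f j (sz j y) by exists y.
  rewrite (actC 0 n (sz n (sz j y)) r v (I0 (sz n (sz j y))) hr).
  have -> : forall x : int, 0 + x = x by move=> x; lia.
  rewrite mulrC /=.
  have e := actC n 0 r (sz j y) v hr (I0 (sz j y)).
  rewrite (_ : n + 0 = n) in e; last by lia.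
  rewrite /sz in e hz *; by rewrite -e hv // act0.
have f_max : forall j, is_maximal_ideal (f j).
  move=> j; apply: (img_maximal (rhom_sigz _ sigK sigiK j) (rhom_sigz _ sigK sigiK (- j))
    (sigzK _ sigK sigiK j) (sigzKi _ sigK sigiK j) m_max).
pose E a b := same_set (f a) (f b).
have Esym : forall a b, E a b -> E b a by move=> a b h x; split => /h.
have Etrans : forall a b c, E a b -> E b c -> E a c.
  by move=> a b c h1 h2 x; split => [/h1/h2|/h2/h1].
have fshift : forall c a x, f (c + a) x <-> img (sz c) (f a) x.
  move=> c a x; split.
  - by move=> [y [hy ->]]; exists (sz a y); split; [exists y | rewrite /sz (sigz_add _ sigK sigiK)].
  - by move=> [_ [[y [hy ->]] ->]]; exists y; split => //; rewrite /sz (sigz_add _ sigK sigiK).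
have Eshift : forall c a b, E a b -> E (c + a) (c + b).
  move=> c a b h x; rewrite !fshift; split.
  - by move=> [y [hy ->]]; exists y; split => //; apply/h.
  - by move=> [y [hy ->]]; exists y; split => //; apply/h.
have dist : forall d d', d != d' -> ~ E d d'.
  move=> d d' hne hE.
  have hE0 : E 0 (d' - d) by have := Eshift (- d) _ _ hE; rewrite addNr addrC.
  have [p [p0 hp]] : exists p : nat, (0 < p)%N /\ E 0 p.
    move: hE0; case hdd: (d' - d) => [q|q] hE0.
    - exists q; split => //; case: q hdd {hE0} => // /eqP; rewrite subr_eq0 => /eqP h.
      by move: hne; rewrite h eqxx.
    - exists q.+1; split => //; apply: Esym.
      have := Eshift (Posz q.+1) _ _ hE0; rewrite addr0.
      by have -> : Posz q.+1 + Negz q = 0 by rewrite NegzE; lia.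
  have Eper : forall a (q : nat), E a (a + q%:Z * p%:Z).
    move=> a; elim => [|q IH]; first by rewrite mul0r addr0 => x.
    apply: (Etrans _ _ _ IH).
    have -> : a + (q.+1)%:Z * p%:Z = (a + q%:Z * p%:Z) + p%:Z.
      have -> : (q.+1)%:Z = q%:Z + 1 by lia.
      by rewrite mulrDl mul1r addrA.

    by have := Eshift (a + q%:Z * p%:Z) _ _ hp; rewrite addr0.
  have EperZ : forall a (q : int), E a (a + q * p%:Z).
    move=> a [q|q]; first exact: Eper.
    apply: Esym; have := Eper (a + Negz q * p%:Z) q.+1.
    by rewrite NegzE mulNr addrNK.
  have Emod : forall a, E ((a %% p%:Z)%Z) a.
    move=> a; have := EperZ ((a %% p%:Z)%Z) ((a %/ p%:Z)%Z).
    by rewrite addrC -divz_eq.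
  have [l0 hl0] := orbit_infinite p (fun i => f (Posz (nat_of_ord i))).
  have hge : 0 <= (l0 %% p%:Z)%Z by apply: modz_ge0; lia.
  have hlt : (l0 %% p%:Z)%Z < p%:Z by apply: ltz_pmod; lia.
  have hi : (absz (l0 %% p%:Z)%Z < p)%N by lia.
  apply: (hl0 (Ordinal hi)) => /=.
  have -> : Posz (absz (l0 %% p%:Z)%Z) = (l0 %% p%:Z)%Z by lia.
  exact/Esym/Emod.
case: (classic (exists v0, v0 != 0 /\ wspace act (f l) v0)) => [[v0 [v0nz hv0]] | hno]; last first.
  exists 0; split; first exact: wsp0.
  move=> v hv; exists 0; case: (eqVneq v 0) => [->|nz]; first by rewrite act0.
  by exfalso; apply: hno; exists v.
exists v0; split => // u hu.
pose N := fun u => exists L : seq (int * R), (forall p, p \in L -> I p.1 p.2) /\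
  u = \sum_(p <- L) act p.1 p.2 v0.
have Nsub : is_BR_submodule sig sigi H J act N.
  split.
  - by exists [::]; split => //; rewrite big_nil.
  - move=> _ _ [L1 [h1 ->]] [L2 [h2 ->]]; exists (L1 ++ L2); split; last by rewrite big_cat.
    by move=> p; rewrite mem_cat => /orP [/h1|/h2].
  - move=> n r _ hr [L [hL ->]]; exists [seq (n + p.1, r * sz n p.2) | p <- L]; split.
    + move=> q /mapP [p hp ->] /=; apply: (BRI_mul _ sigK sigiK) => //; exact: hL.
    + have actsum : forall (L' : seq (int * R)) (G : int * R -> M),
          act n r (\sum_(p <- L') G p) = \sum_(p <- L') act n r (G p).
        elim => [|p L' IH] G; first by rewrite !big_nil act0.
        by rewrite !big_cons actD // IH.
      rewrite actsum big_map; apply: eq_big_seq => p hp /=.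
      by rewrite actC //; apply: hL.
have Nall : forall v, N v.
  case: (Msimp N Nsub) => // h0; exfalso.
  have : N v0.
    exists [:: (0, 1)]; split; last by rewrite big_seq1 act01.
    by move=> p; rewrite inE => /eqP ->.
  by move/h0 => e; move: v0nz; rewrite e eqxx.
case: (Nall u) => L [hL eu].
pose Q : seq (int * M) := (0, - u) :: [seq (p.1, act p.1 p.2 v0) | p <- L].
have hQ : forall q, q \in Q -> wspace act (f (l + q.1)) q.2.
  move=> q; rewrite inE => /orP [/eqP -> | /mapP [p hp ->]] /=.
  - by rewrite addr0; apply: wspN.
  - by apply: shift => //; apply: hL.
have hsum : \sum_(q <- Q) q.2 = 0.
  by rewrite big_cons big_map /= -eu addNr.
pose D := undup [seq q.1 | q <- Q].
pose b := fun d => \sum_(q <- Q | q.1 == d) q.2.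
have hb : forall d, wspace act (f (l + d)) (b d).
  move=> d; rewrite /b big_seq_cond.
  apply: (big_ind (fun v => wspace act (f (l + d)) v)) => //.
  - exact: wspD.
  - by move=> q /andP [hq /eqP <-]; apply: hQ.
have hexch : \sum_(d <- D) b d = \sum_(q <- Q) q.2.
  rewrite /b; under eq_bigr => d _ do rewrite big_mkcond.
  rewrite exchange_big /=; apply: eq_big_seq => q hq.
  have hD : q.1 \in D by rewrite mem_undup map_f.
  rewrite (bigD1_seq q.1) //= ?undup_uniq // eqxx big1 ?addr0 // => d hd.
  by rewrite eq_sym (negbTE hd).
have h0D : (0 : int) \in D.
  by rewrite mem_undup; apply/mapP; exists (0, - u) => //; rewrite inE eqxx.
have hi0 : (index (0:int) D < size D)%N by rewrite index_mem.
have hb0 : b 0 = 0.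
  have := Wdirect (size D) (fun i => f (l + nth 0 D i)) (fun i => b (nth 0 D i)).
  move=> /(_ _ _ _ _ (Ordinal hi0)) /=; rewrite nth_index //; apply.
  - by move=> i; apply: f_max.
  - by move=> i; apply: hb.
  - move=> i j hij; apply: dist.
    rewrite (inj_eq (addrI l)) nth_uniq ?undup_uniq //.
  - by rewrite (big_nth 0) big_mkord in hexch; rewrite hexch hsum.
have hsum0 : forall L' : seq (int * R),
    \sum_(p <- L' | p.1 == 0) act p.1 p.2 v0 = act 0 (\sum_(p <- L' | p.1 == 0) p.2) v0.
  elim => [|p L' IH]; first by rewrite !big_nil act0r0.
  rewrite !big_cons; case: eqP => [e|_] //.
  by rewrite IH actDr ?I0 // e.
exists (\sum_(p <- L | p.1 == 0) p.2).
move: hb0; rewrite /b big_cons /= big_map /= hsum0 => e.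
by apply/eqP; rewrite eq_sym -subr_eq0 addrC e.
Qed.
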